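(* Let $d>0$, $a\geq 7$ be integers with $\gcd(a,d)=1$, $\Gamma_4=\langle a,2a+d,3a+3d,4a+6d\rangle$ and $M=\Gamma_4\setminus\{0\}$. For $0\leq t\leq a-1$ let $(\mu_t,\nu_t,\xi_t)$ be as in the context, and for $s\geq 0$ let $\omega_{s,t}$ be as in the context. Then for all $0\leq t\leq a-1$ and $0\leq s\leq \lfloor a/6\rfloor+2$: $$\omega_{s,t}=\begin{cases}(4\mu_t+3\nu_t+2\xi_t)a+td & \text{if } 0\leq s\leq \mu_t+\nu_t+\xi_t,\\ (3\mu_t+2\nu_t+\xi_t+s)a+td & \text{if } \mu_t+\nu_t+\xi_t< s\leq \lfloor a/6\rfloor+2,\end{cases}$$ so the Apéry table has $\lfloor a/6\rfloor+3$ rows (indexed $s=0,\dots,\lfloor a/6\rfloor+2$) and $a$ columns. Moreover, the reduction number of the maximal ideal $\mathfrak{m}$ of $k[[t^a,t^{2a+d},t^{3a+3d},t^{4a+6d}]]$ with respect to $(t^a)$, i.e. the least $r$ such that $(n+1)M=a+nM$ for all $n\geq r$, equals $\lfloor a/6\rfloor+2$.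
   Context: For $1\leq i\leq a-1$ write $i=6\mu_i+q_i$ with $0\leq q_i<6$, set $(\nu_i,\xi_i)=(1,q_i-3)$ if $q_i\geq3$ and $(\nu_i,\xi_i)=(0,q_i)$ if $q_i<3$; set $(\mu_0,\nu_0,\xi_0)=(0,0,0)$. For $n\geq1$, $nM=M+\cdots+M$ ($n$ copies). The Apéry table entries are: $\omega_{0,t}=(4\mu_t+3\nu_t+2\xi_t)a+td$ (the element of $\mathrm{Ap}(\Gamma_4,a)$ congruent to $td$ mod $a$, with $\omega_{0,0}=0$), and for $s\geq1$, $\omega_{s,t}$ is the smallest element of $sM$ congruent to $td$ modulo $a$ (equivalently $\mathrm{Ap}(sM)=sM\setminus(a+sM)=\{\omega_{s,0},\dots,\omega_{s,a-1}\}$). *)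

(* Defs.v *)
From mathcomp Require Import all_boot.
Set Implicit Arguments. Unset Strict Implicit. Unset Printing Implicit Defensive.

Definition inGamma4 (a d x : nat) : Prop :=
  exists x1 x2 x3 x4 : nat,
    x = x1 * a + x2 * (2 * a + d) + x3 * (3 * a + 3 * d) + x4 * (4 * a + 6 * d).

Definition inM (a d x : nat) : Prop := inGamma4 a d x /\ x <> 0.

Definition inSM (a d s x : nat) : Prop :=
  exists l : seq nat, size l = s /\ (forall y, y \in l -> inM a d y) /\ sumn l = x.

Definition rowSet (a d s x : nat) : Prop :=
  if s == 0 then inGamma4 a d x else inSM a d s x.

Definition is_omega (a d s t w : nat) : Prop :=
  [/\ rowSet a d s w, w = t * d %[mod a] &
      forall v, rowSet a d s v -> v = t * d %[mod a] -> w <= v].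

(* mu_t, nu_t, xi_t: t = 6 mu_t + q_t, (nu,xi) = (1,q-3) if q >= 3, (0,q) else.
   For t = 0 this gives (0,0,0), matching the convention of the paper. *)
Definition mu (t : nat) : nat := t %/ 6.
Definition nu (t : nat) : nat := if 3 <= t %% 6 then 1 else 0.
Definition xi (t : nat) : nat := if 3 <= t %% 6 then t %% 6 - 3 else t %% 6.

Definition red_eq (a d n : nat) : Prop :=
  forall x, inSM a d n.+1 x <-> exists y, inSM a d n y /\ x = a + y.

Definition is_reduction_number (a d r : nat) : Prop :=
  (forall n, r <= n -> red_eq a d n) /\
  (forall r', (forall n, r' <= n -> red_eq a d n) -> r <= r').

(* Main.v *)
Require Import Defs.
From mathcomp Require Import all_boot zify.

Definition W k := 3 * mu k + 2 * nu k + xi k.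
Definition C k := 4 * mu k + 3 * nu k + 2 * xi k.
Definition Nc k := mu k + nu k + xi k.

Lemma decomp k : k = 6 * mu k + 3 * nu k + xi k.
Proof. rewrite /mu /nu /xi; case: ifP => ?; lia. Qed.

Lemma greedy y2 y3 y4 :
  W (y2 + 3 * y3 + 6 * y4) <= y2 + 2 * y3 + 3 * y4 /\
  C (y2 + 3 * y3 + 6 * y4) <= 2 * y2 + 3 * y3 + 4 * y4.
Proof. rewrite /W /C /mu /nu /xi; case: ifP => ?; lia. Qed.

Lemma mono t k : t + 6 <= k -> W t <= W k /\ C t <= C k.
Proof. rewrite /W /C /mu /nu /xi => h; do 2 case: ifP => ?; lia. Qed.

Lemma Nc_bound t a : t < a -> Nc t <= a %/ 6 + 2.
Proof. rewrite /Nc /mu /nu /xi => h; case: ifP => ?; lia. Qed.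

Lemma poly (x y z : nat) : x * (y + z) = x * y + x * z.
Proof. lia. Qed.
Set Implicit Arguments. Unset Strict Implicit.

Definition rep a d s x := exists x1 x2 x3 x4,
  x = x1 * a + x2 * (2 * a + d) + x3 * (3 * a + 3 * d) + x4 * (4 * a + 6 * d)
  /\ s <= x1 + x2 + x3 + x4.

Lemma rep_sum a d (l : seq nat) : (forall y, y \in l -> inM a d y) -> rep a d (size l) (sumn l).
Proof.
elim: l => [|y l IH] H.
  by exists 0, 0, 0, 0; rewrite !mul0n.
have [[y1 [y2 [y3 [y4 Ey]]]] Hy0] := H y (mem_head _ _).
have [x1 [x2 [x3 [x4 [Ex Hs]]]]] : rep a d (size l) (sumn l).
  by apply: IH => z hz; apply: H; rewrite in_cons hz orbT.
have pos : 0 < y1 + y2 + y3 + y4.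
  rewrite lt0n; apply/eqP => h; apply: Hy0.
  have [e1 [e2 [e3 e4]]] : y1 = 0 /\ y2 = 0 /\ y3 = 0 /\ y4 = 0 by lia.
  by rewrite Ey e1 e2 e3 e4 !mul0n.
exists (y1 + x1), (y2 + x2), (y3 + x3), (y4 + x4); split => /=.
  rewrite Ey Ex; lia.
lia.
Qed.

Lemma inM_sum a d (l : seq nat) : l != [::] -> (forall y, y \in l -> inM a d y) -> inM a d (sumn l).
Proof.
move=> ne H; have [x1 [x2 [x3 [x4 [Ex _]]]]] := rep_sum H; move: Ex.
move=> Ex; split; first by exists x1, x2, x3, x4.
clear Ex.
case: l ne H => [//|y l] _ H /=.
have [_ Hy] := H y (mem_head _ _); lia.
Qed.

Lemma merge a d s (l : seq nat) : 0 < s -> s <= size l -> (forall y, y \in l -> inM a d y) ->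
  inSM a d s (sumn l).
Proof.
move=> s0 sl H.
exists (rcons (take (s - 1) l) (sumn (drop (s - 1) l))); split; last split.
- rewrite size_rcons size_takel; lia.
- move=> y; rewrite mem_rcons in_cons => /orP [/eqP -> | hy].
    apply: inM_sum; last by move=> z hz; apply: H; exact: mem_drop hz.
    rewrite -size_eq0 size_drop subn_eq0 -ltnNge; apply: leq_trans sl; by rewrite ltn_subrL s0.
  by apply: H; exact: mem_take hy.
- by rewrite sumn_rcons -sumn_cat cat_take_drop.
Qed.

Lemma rep_SM a d s x : 0 < s -> 0 < a -> rep a d s x -> inSM a d s x.
Proof.
move=> s0 a0 [x1 [x2 [x3 [x4 [Ex Hs]]]]].
set l := nseq x1 a ++ nseq x2 (2 * a + d) ++ nseq x3 (3 * a + 3 * d) ++ nseq x4 (4 * a + 6 * d).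
have -> : x = sumn l by rewrite /l !sumn_cat !sumn_nseq Ex; lia.
apply: merge => //.
  by rewrite /l !size_cat !size_nseq; lia.
move=> y; rewrite /l !mem_cat !mem_nseq => /orP [|/orP [|/orP []]] /andP [_ /eqP ->].
- split; [by exists 1, 0, 0, 0; lia | lia].
- split; [by exists 0, 1, 0, 0; lia | lia].
- split; [by exists 0, 0, 1, 0; lia | lia].
- split; [by exists 0, 0, 0, 1; lia | lia].
Qed.

Lemma SM_rep a d s x : inSM a d s x -> rep a d s x.
Proof. by move=> [l [<- [H <-]]]; apply: rep_sum. Qed.

Lemma rowSet_rep a d s x : 0 < a -> rowSet a d s x <-> rep a d s x.
Proof.
move=> a0; rewrite /rowSet; case: eqP => [-> | /eqP s0].
  split; first by move=> [x1 [x2 [x3 [x4 E]]]]; exists x1, x2, x3, x4.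
  by move=> [x1 [x2 [x3 [x4 [E _]]]]]; exists x1, x2, x3, x4.
split; first exact: SM_rep.
by apply: rep_SM; lia.
Qed.

Lemma rep_build a d s A k : s + W k <= A -> C k <= A -> rep a d s (A * a + k * d).
Proof.
move=> h1 h2.
exists (A - C k), (xi k), (nu k), (mu k).
have dk := decomp k.
have hC : C k = W k + Nc k by rewrite /C /W /Nc; lia.
move: h1 h2 hC; rewrite /C /W /Nc => h1 h2 hC.
split; last lia.
move: dk h1 h2; set m := mu k; set n := nu k; set x := xi k => dk h1 h2.
set e := A - _.
have hA : A = e + (4 * m + 3 * n + 2 * x) by rewrite /e; lia.
rewrite hA dk; lia.
Qed.

Lemma rep_bound a d s x : rep a d s x ->
  exists A k, x = A * a + k * d /\ s + W k <= A /\ C k <= A.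
Proof.
move=> [x1 [x2 [x3 [x4 [Ex Hs]]]]].
have [g1 g2] := greedy x2 x3 x4.
exists (x1 + 2 * x2 + 3 * x3 + 4 * x4), (x2 + 3 * x3 + 6 * x4); split; first lia.
lia.
Qed.

Lemma cancel_mod a d k t : coprime a d -> k * d = t * d %[mod a] -> k = t %[mod a].
Proof.
move=> co.
wlog tk : k t / t <= k.
  move=> H; case: (leqP t k) => h; first exact: H.
  by move=> e; apply/esym/H; [exact: ltnW | exact/esym].
move=> /eqP; rewrite eqn_mod_dvd; last exact: leq_mul.
rewrite -mulnBl Gauss_dvdl // => hd; apply/eqP; by rewrite eqn_mod_dvd.
Qed.

Lemma lower a d s t v : coprime a d -> 7 <= a -> t < a -> rep a d s v ->
  v = t * d %[mod a] -> maxn (s + W t) (C t) * a + t * d <= v.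
Proof.
move=> co a7 ta hr hv.
have [A [k [Ev [h1 h2]]]] := rep_bound hr.
have hk : k = t %[mod a].
  apply: (@cancel_mod a d k t co); rewrite -hv Ev; by rewrite modnMDl.
have kt : k %% a = t by rewrite hk modn_small.
have dk := divn_eq k a.
have [mt tk] : (W t <= W k /\ C t <= C k) /\ t <= k.
  case: (posnP (k %/ a)) => h.
    have -> : k = t by rewrite dk h kt.
    by [].
  split; last by lia.
  apply: mono.
  have : a <= k %/ a * a by rewrite leq_pmull.
  lia.
rewrite Ev; apply: leq_add; last exact: leq_mul.
apply: leq_mul => //; rewrite geq_max; lia.
Qed.

Lemma ifF s t :
  (if s <= mu t + nu t + xi t
   then (4 * mu t + 3 * nu t + 2 * xi t)
   else (3 * mu t + 2 * nu t + xi t + s)) = maxn (s + W t) (C t).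
Proof. rewrite /W /C; case: leqP => h; lia. Qed.

Unset Implicit Arguments.
Theorem corollary6p4 (a d : nat) :
  0 < d -> 7 <= a -> coprime a d ->
  (forall t s, t < a -> s <= a %/ 6 + 2 ->
     is_omega a d s t
       (if s <= mu t + nu t + xi t
        then (4 * mu t + 3 * nu t + 2 * xi t) * a + t * d
        else (3 * mu t + 2 * nu t + xi t + s) * a + t * d)) /\
  is_reduction_number a d (a %/ 6 + 2).
Proof.
move=> d0 a7 co.
have a0 : 0 < a by lia.
split.
  move=> t s ta _.
  have -> : (if s <= mu t + nu t + xi t
        then (4 * mu t + 3 * nu t + 2 * xi t) * a + t * d
        else (3 * mu t + 2 * nu t + xi t + s) * a + t * d)
      = maxn (s + W t) (C t) * a + t * d by rewrite -ifF; case: ifP.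
  split.
  - apply/rowSet_rep => //; apply: rep_build; [exact: leq_maxl | exact: leq_maxr].
  - by rewrite modnMDl.
  - move=> v /(rowSet_rep _ _ _ a0) hv hm; exact: lower co a7 ta hv hm.
have redE : forall n, a %/ 6 + 2 <= n -> red_eq a d n.
  move=> n hn x; split.
    move=> /SM_rep /rep_bound [A [k [Ex [h1 h2]]]].
    case: (leqP a k) => ka.
      have [m1 m2] := mono (k - a) k ltac:(lia).
      exists ((A + d - 1) * a + (k - a) * d); split.
        apply: rep_SM; [lia | lia |].
        apply: rep_build; lia.
      rewrite Ex.
      have hk : k = a + (k - a) by lia.
      have hA : A = 1 + (A - 1) by lia.
      set k' := k - a in hk *; set A' := A - 1 in hA *.
      rewrite hk hA; have -> : 1 + A' + d - 1 = A' + d by lia.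
      lia.
    have hN := Nc_bound k a ka.
    exists ((A - 1) * a + k * d); split.
      apply: rep_SM; [lia | lia |].
      have hC : C k = W k + Nc k by rewrite /C /W /Nc; lia.
      apply: rep_build; lia.
    rewrite Ex.
    have hA : A = 1 + (A - 1) by lia.
    set A' := A - 1 in hA *; rewrite hA; lia.
  move=> [y [hy ->]]; move: hy => [l [hs [hl <-]]].
  exists (a :: l); split; first by rewrite /= hs.
  split; last by [].
  move=> z; rewrite in_cons => /orP [/eqP -> | hz]; last exact: hl.
  split; [by exists 1, 0, 0, 0; lia | lia].
split; first exact: redE.
move=> r' H; rewrite leqNgt; apply/negP => hr.
set m := a %/ 6.
have m1 : 1 <= m by rewrite /m; lia.
set t := 6 * m - 1.
have ta : t < a by rewrite /t /m; lia.
have hmu : mu t = m - 1 by rewrite /t /mu; lia.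
have hnu : nu t = 1 by rewrite /t /nu; case: ifP => ?; lia.
have hxi : xi t = 2 by rewrite /t /xi; case: ifP => ?; lia.
have eW : W t = 3 * m + 1 by rewrite /W hmu hnu hxi; lia.
have eC : C t = 4 * m + 3 by rewrite /C hmu hnu hxi; lia.
set x := (4 * m + 3) * a + t * d.
have hx : inSM a d (m + 1).+1 x.
  apply: rep_SM; [lia | lia |]; apply: rep_build; lia.
have [y [hy ex]] := (H (m + 1) ltac:(lia) x).1 hx.
have hm : y = t * d %[mod a].
  by rewrite -(modnDl y a) -ex modnMDl.
have := lower co a7 ta (SM_rep hy) hm.
rewrite eW eC.
have -> : maxn (m + 1 + (3 * m + 1)) (4 * m + 3) = 4 * m + 3 by lia.
move: ex; rewrite /x; lia.
Qed.
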